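(* Let $H=(X\cup Y,E_H)$ be a $3$-regular bipartite graph with $|X|=|Y|=n$, let $\mathrm{order}:Y\to\{1,\dots,n\}$ be a bijection, and let $G$ be the instance of the rank-maximal matchings problem constructed as follows. Applicants: $a_x$ for $x\in X$, and dummy applicants $ad_1,\dots,ad_{n-3}$. Posts: $p_y$ for $y\in Y$, and dummy posts $pd_1,\dots,pd_{n-3}$. Applicant $ad_i$ has the single post $pd_i$ at rank $1$. For $x\in X$ with neighbours $y_1,y_2,y_3$ in $H$, applicant $a_x$ ranks $p_{y_j}$ at rank $\mathrm{order}(y_j)$ ($j=1,2,3$), and the remaining $n-3$ ranks in $\{1,\dots,n\}$ of $a_x$'s list are filled by the $n-3$ dummy posts, one per rank. Then there is a one-to-one correspondence between perfect matchings of $H$ and rank-maximal matchings of $G$: the map $M\mapsto\{(a_x,p_y):(x,y)\in M\}\cup\{(ad_i,pd_i):1\le i\le n-3\}$ is a bijection from the set of perfect matchings of $H$ onto the set of rank-maximal matchings of $G$.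
   Context: An instance of the rank-maximal matchings problem is a bipartite graph between applicants and posts in which each edge $(a,p)$ carries a rank $i$, meaning $p$ is an $i$-th choice of $a$. The signature of a matching is $(x_1,\dots,x_r)$, $x_i$ the number of applicants matched along rank-$i$ edges ($r$ the maximum rank); a matching is rank-maximal if its signature is lexicographically maximum among all matchings of the instance. *)

(* Defs.v *)
From mathcomp Require Import all_boot.
Set Implicit Arguments. Unset Strict Implicit. Unset Printing Implicit Defensive.

(* ---------- Generic rank-maximal matchings instances ----------
   An instance is given by finite types of applicants A and posts P and a
   rank function  rk : A -> P -> nat , where  rk a p = i > 0  means that
   (a,p) is an edge of rank i (p is an i-th choice of a), and  rk a p = 0
   means that (a,p) is not an edge. *)
Section RMM.
Variables (A P : finType) (rk : A -> P -> nat).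

Definition is_edge (a : A) (p : P) : bool := 0 < rk a p.

Definition is_matching (M : {set A * P}) : Prop :=
  [/\ forall e, e \in M -> is_edge e.1 e.2,
      forall a, #|[set e in M | e.1 == a]| <= 1
    & forall p, #|[set e in M | e.2 == p]| <= 1].

Definition max_rank : nat := \max_(e : A * P) rk e.1 e.2.

Definition signature (M : {set A * P}) : seq nat :=
  [seq #|[set e in M | rk e.1 e.2 == i]| | i <- iota 1 max_rank].

End RMM.

Fixpoint lex_le (s t : seq nat) : bool :=
  match s, t with
  | [::], _ => true
  | _ :: _, [::] => false
  | x :: s', y :: t' => (x < y) || ((x == y) && lex_le s' t')
  end.

Definition rank_maximal (A P : finType) (rk : A -> P -> nat)
    (M : {set A * P}) : Prop :=
  is_matching rk M /\
  forall M' : {set A * P}, is_matching rk M' ->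
    lex_le (signature rk M') (signature rk M).

Definition perfect_matching (X Y : finType) (E : X -> Y -> bool)
    (M : {set X * Y}) : Prop :=
  [/\ forall e, e \in M -> E e.1 e.2,
      forall x, #|[set e in M | e.1 == x]| = 1
    & forall y, #|[set e in M | e.2 == y]| = 1].

(* ---------- The instance G of the reduction ----------
   Applicants: inl x = a_x (x in X), inr i = ad_(i+1) (i : 'I_(n-3)).
   Posts:      inl y = p_y (y in Y), inr i = pd_(i+1).
   ord_ : Y -> 'I_n, so that the rank of p_y is (ord_ y).+1 in {1..n}.
   dr x i = the rank at which a_x lists the dummy post pd_(i+1). *)
Definition G_rank (X Y : finType) (n : nat) (E : X -> Y -> bool)
    (ord_ : Y -> 'I_n) (dr : X -> 'I_(n - 3) -> nat)
    (a : X + 'I_(n - 3)) (p : Y + 'I_(n - 3)) : nat :=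
  match a, p with
  | inl x, inl y => if E x y then (ord_ y).+1 else 0
  | inl x, inr j => dr x j
  | inr i, inl _ => 0
  | inr i, inr j => if i == j then 1 else 0
  end.

Definition lift_matching (X Y : finType) (n : nat) (M : {set X * Y})
    : {set (X + 'I_(n - 3)) * (Y + 'I_(n - 3))} :=
  [set ((inl e.1 : X + 'I_(n - 3)), (inl e.2 : Y + 'I_(n - 3))) | e in M]
  :|: [set ((inr i : X + 'I_(n - 3)), (inr i : Y + 'I_(n - 3))) | i : 'I_(n - 3)].

(* Main.v *)
Require Import Defs.
From mathcomp Require Import all_boot zify.
Set Implicit Arguments. Unset Strict Implicit. Unset Printing Implicit Defensive.

Section HallS.
Variables (X Y : finType) (E : X -> Y -> bool) (y0 : Y).
Definition nbr (B : {set Y}) (S : {set X}) := [set y in B | [exists x in S, E x y]].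
Definition hallc (A : {set X}) (B : {set Y}) :=
  forall S : {set X}, S \subset A -> #|S| <= #|nbr B S|.

Lemma hall k : forall (A : {set X}) (B : {set Y}), #|A| <= k -> hallc A B ->
  exists f : X -> Y, (forall x, x \in A -> (f x \in B) && E x (f x))
                     /\ {in A &, injective f}.
Proof.
elim: k => [|k IH] A B hA hc.
  have A0 : A = set0 by apply/eqP; rewrite -cards_eq0; lia.
  by exists (fun _ => y0); split => [x|x]; rewrite A0 inE.
case: (set_0Vmem A) => [A0|[x0 x0A]].
  by exists (fun _ => y0); split => [x|x]; rewrite A0 inE.
case: (boolP [exists S : {set X}, [&& S \proper A, S != set0 & #|nbr B S| <= #|S|]]).
  case/existsP => S /and3P [SA S0 NS].
  have sSA : S \subset A := proper_sub SA.
  have hc1 : hallc S (nbr B S).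
    move=> T TS.
    have -> : nbr (nbr B S) T = nbr B T.
      apply/setP => y; rewrite !inE; case: (y \in B) => //=.
      apply/andP/idP => [[]//|h]; split => //.
      case/existsP: h => x /andP [xT Exy]; apply/existsP; exists x.
      by rewrite Exy (subsetP TS).
    exact: hc (subset_trans TS sSA).
  have [f1 [f1B f1i]] := IH S (nbr B S) (leq_trans (proper_card SA) hA) hc1.
  have hc2 : hallc (A :\: S) (B :\: nbr B S).
    move=> T TAS.
    have TA : T \subset A by apply: subset_trans TAS (subsetDl _ _).
    have h := hc (T :|: S); rewrite subUset TA sSA in h; have {}h := h isT.
    have dTS : T :&: S = set0.
      apply/setP => x; rewrite !inE; apply/andP => [[xT xS]].
      by move: (subsetP TAS x xT); rewrite !inE xS.
    have : #|T :|: S| = #|T| + #|S| by rewrite cardsU dTS cards0 subn0.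
    have sub : nbr B (T :|: S) \subset nbr (B :\: nbr B S) T :|: nbr B S.
      apply/subsetP => y; rewrite !inE => /andP [yB /existsP [x /andP [xTS Exy]]].
      rewrite yB /=; case: (boolP [exists x0, (x0 \in S) && E x0 y]) => [|nS]; first by rewrite orbT.
      rewrite orbF andbT; apply/existsP; exists x; rewrite Exy andbT.
      move: xTS; rewrite inE => /orP [//|xS]; exfalso; move/negP: nS; apply.
      by apply/existsP; exists x; rewrite xS Exy.
    have := subset_leq_card sub; rewrite cardsU; lia.
  have hAS : #|A :\: S| <= k.
    rewrite (cardsDS sSA); move: (proper_card SA); rewrite -card_gt0 in S0; lia.
  have [f2 [f2B f2i]] := IH _ _ hAS hc2.
  exists (fun x => if x \in S then f1 x else f2 x); split.
    move=> x xA; case: ifP => xS.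
      by move/andP: (f1B x xS) => [/setIdP [-> _] ->].
    have : x \in A :\: S by rewrite inE xS xA.
    by move/f2B => /andP [/setDP [-> _] ->].
  move=> x1 x2 x1A x2A /=.
  case: ifP => x1S; case: ifP => x2S.
  - exact: f1i.
  - move=> e; have : x2 \in A :\: S by rewrite inE x2S x2A.
    move/f2B => /andP [/setDP [_ h] _]; move: h; rewrite -e.
    by move/andP: (f1B x1 x1S) => [-> _].
  - move=> e; have : x1 \in A :\: S by rewrite inE x1S x1A.
    move/f2B => /andP [/setDP [_ h] _]; move: h; rewrite e.
    by move/andP: (f1B x2 x2S) => [-> _].
  - by apply: f2i; rewrite inE ?x1S ?x2S.
move/existsPn => nt.
have := hc [set x0]; rewrite sub1set x0A cards1 => /(_ isT).
rewrite card_gt0 => /set0Pn [y1]; rewrite inE => /andP [y1B /existsP [x]].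
rewrite inE => /andP [/eqP -> Ey1]; clear x.
have hc' : hallc (A :\ x0) (B :\ y1).
  move=> T TA.
  case: (set_0Vmem T) => [->|[t tT]]; first by rewrite cards0.
  have TA' : T \subset A by apply: subset_trans TA (subsetDl _ _).
  have Tp : T \proper A.
    apply/properP; split => //; exists x0 => //.
    by apply/negP => /(subsetP TA); rewrite !inE eqxx.
  have := nt T; rewrite Tp /= -card_gt0.
  have -> : 0 < #|T| by apply/card_gt0P; exists t.
  rewrite /= -ltnNge => lt.
  have sub : nbr B T \subset y1 |: nbr (B :\ y1) T.
    apply/subsetP => y; rewrite !inE => /andP [yB ex].
    by case: eqP => //= _; rewrite yB ex.
  have := subset_leq_card sub; rewrite cardsU1; lia.
have hk : #|A :\ x0| <= k by move: hA; rewrite (cardsD1 x0 A) x0A; lia.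
have [f [fB fi]] := IH _ _ hk hc'.
exists (fun x => if x == x0 then y1 else f x); split.
  move=> x xA; case: eqP => [->|/eqP nx]; first by rewrite y1B.
  have : x \in A :\ x0 by rewrite !inE nx.
  by move/fB => /andP [/setD1P [_ ->] ->].
move=> x1 x2 x1A x2A /=.
case: eqP => [->|/eqP n1]; case: eqP => [->|/eqP n2] //.
- move=> e; have : x2 \in A :\ x0 by rewrite !inE n2.
  by move/fB => /andP [/setD1P [h _] _]; move: h; rewrite -e eqxx.
- move=> e; have : x1 \in A :\ x0 by rewrite !inE n1.
  by move/fB => /andP [/setD1P [h _] _]; move: h; rewrite e eqxx.
- by apply: fi; rewrite !inE ?n1 ?n2.
Qed.
End HallS.


Lemma sum_eq_le1 (x:nat) s : uniq s -> \sum_(i <- s) (x == i : nat) <= 1.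
Proof.
elim: s => [|a s IH] /=; first by rewrite big_nil.
move/andP=> [nas us]; rewrite big_cons; case: eqP => [ex|_]; last by rewrite add0n IH.
subst x.
rewrite big1_seq // => i /andP [_ iS]; case: eqP => // ex; move: nas; by rewrite ex iS.
Qed.

Lemma lex_map_le (f g : nat -> nat) s :
  (forall i, i \in s -> f i <= g i) -> lex_le (map f s) (map g s).
Proof.
elim: s => [|a s IH] //= h.
have := h a (mem_head _ _); rewrite leq_eqVlt => /orP [/eqP ->|->] //.
rewrite ltnn eqxx /=; apply: IH => i iS0; apply: h; by rewrite in_cons iS0 orbT.
Qed.

Lemma lex_map_eq (f g : nat -> nat) s :
  lex_le (map g s) (map f s) -> (forall i, i \in s -> f i <= g i) ->
  forall i, i \in s -> f i = g i.
Proof.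
elim: s => [|a s IH] //= hl h i.
have ha := h a (mem_head _ _).
move: hl => /orP [lt|/andP [/eqP ea hl]]; first by move: (leq_trans lt ha); rewrite ltnn.
rewrite in_cons => /orP [/eqP ->//|iS0]; apply: IH => // j js; apply: h.
by rewrite in_cons js orbT.
Qed.

Lemma card_set_sum (T : finType) (P : pred T) : #|[set y | P y]| = \sum_y (P y : nat).
Proof.
rewrite -sum1_card big_mkcond /=; apply: eq_bigr => y _; rewrite inE; by case: (P y).
Qed.

Lemma reg_hall (X Y : finType) (E : X -> Y -> bool) d
  (hregX : forall x : X, #|[set y | E x y]| = d)
  (hregY : forall y : Y, #|[set x | E x y]| = d) (hd : 0 < d) :
  hallc E setT setT.
Proof.
move=> S _.
have h1 : d * #|S| = \sum_(x in S) \sum_y (E x y : nat).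
  rewrite -sum1_card big_distrr /=; apply: eq_bigr => x _; by rewrite muln1 -card_set_sum.
have h2 : \sum_(x in S) \sum_y (E x y : nat) <= d * #|nbr E setT S|.
  rewrite exchange_big /= (bigID (fun y => y \in nbr E setT S)) /=.
  rewrite [X in _ + X]big1; last first.
    move=> y; rewrite !inE /= => /existsPn ny; apply: big1 => x xS.
    by move: (ny x); rewrite xS /=; case: (E x y).
  rewrite addn0 -sum1_card big_distrr /=; apply: leq_sum => y _.
  rewrite muln1 -(hregY y) card_set_sum; rewrite [X in _ <= X](bigID (fun x => x \in S)) /=.
  exact: leq_addr.
rewrite -(leq_pmul2l hd) h1; exact: h2.
Qed.


Lemma pm_of (X Y : finType) (E : X -> Y -> bool) (PM : {set X * Y}) :
  #|X| = #|Y| -> (forall e, e \in PM -> E e.1 e.2) ->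
  {in PM &, forall e e', e.1 = e'.1 -> e = e'} ->
  {in PM &, forall e e', e.2 = e'.2 -> e = e'} ->
  (forall x, exists y, (x, y) \in PM) -> perfect_matching E PM.
Proof.
move=> hXY hE i1 i2 ex; split => //.
- move=> x; apply/eqP; rewrite eqn_leq; apply/andP; split.
    apply/card_le1_eqP => e e'; rewrite !inE => /andP [eM /eqP ex1] /andP [e'M /eqP ex2].
    by apply: i1 => //; rewrite ex1 ex2.
  have [y hy] := ex x; apply/card_gt0P; exists (x, y); by rewrite inE hy /=.
have T1 : [set e.1 | e in PM] = setT.
  apply/setP => x; rewrite inE; have [y hy] := ex x; apply/imsetP; by exists (x, y).
have T2 : [set e.2 | e in PM] = setT.
  apply/eqP; rewrite eqEcard subsetT cardsT (card_in_imset i2) -hXY.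
  by rewrite -(@card_in_imset _ _ (fun e : X * Y => e.1) _ i1) T1 cardsT /=.
move=> y; apply/eqP; rewrite eqn_leq; apply/andP; split.
  apply/card_le1_eqP => e e'; rewrite !inE => /andP [eM /eqP ey1] /andP [e'M /eqP ey2].
  by apply: i2 => //; rewrite ey1 ey2.
have : y \in [set e.2 | e in PM] by rewrite T2 inE.
case/imsetP => e eM ->; apply/card_gt0P; exists e; by rewrite inE eM eqxx.
Qed.

Section Main.
Variables (X Y : finType) (n : nat) (E : X -> Y -> bool)
    (ord_ : Y -> 'I_n) (dr : X -> 'I_(n - 3) -> nat).
Hypotheses (hX : #|X| = n) (hY : #|Y| = n)
    (hregX : forall x : X, #|[set y | E x y]| = 3)
    (hregY : forall y : Y, #|[set x | E x y]| = 3)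
    (hord : bijective ord_)
    (hdr_inj : forall x : X, injective (dr x))
    (hdr_range : forall (x : X) (i : 'I_(n - 3)), 1 <= dr x i <= n)
    (hdr_fresh : forall (x : X) (i : 'I_(n - 3)) (y : Y),
        E x y -> dr x i != (ord_ y).+1).
Hypothesis hn : 3 <= n.

Local Notation rk := (G_rank E ord_ dr).
Local Notation AT := (X + 'I_(n - 3))%type.
Local Notation PT := (Y + 'I_(n - 3))%type.

Lemma ord_inj : injective ord_.
Proof. exact: bij_inj. Qed.

Lemma ord_onto (i : 'I_n) : exists y, ord_ y = i.
Proof. case: hord => g og go; by exists (g i). Qed.

Lemma nbr_ex y : exists x, E x y.
Proof.
have : 0 < #|[set x | E x y]| by rewrite hregY.
by case/card_gt0P => x; rewrite inE; exists x.
Qed.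

Lemma rk_le a p : rk a p <= n.
Proof.
case: a => [x|i]; case: p => [y|j] /=.
- case: (E x y) => //; exact: ltn_ord.
- by case/andP: (hdr_range x j).
- by [].
- case: eqP => _; lia.
Qed.

Lemma max_rank_n : max_rank rk = n.
Proof.
apply/eqP; rewrite eqn_leq; apply/andP; split.
  apply/bigmax_leqP => e _; exact: rk_le.
have hlt : n.-1 < n by lia.
have [y hy] := ord_onto (Ordinal hlt).
have [x hx] := nbr_ex y.
apply: leq_trans (leq_bigmax ((inl x, inl y) : AT * PT)) => /=.
rewrite hx hy /=; lia.
Qed.

Lemma post_inj (M : {set AT * PT}) : is_matching rk M ->
  {in M &, forall e e', e.2 = e'.2 -> e = e'}.
Proof.
case=> _ _ hp e e' eM e'M ee.
have /card_le1_eqP h := hp e.2; apply: h; by rewrite inE ?eM ?e'M ?ee eqxx.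
Qed.

Lemma app_inj (M : {set AT * PT}) : is_matching rk M ->
  {in M &, forall e e', e.1 = e'.1 -> e = e'}.
Proof.
case=> _ hp _ e e' eM e'M ee.
have /card_le1_eqP h := hp e.1; apply: h; by rewrite inE ?eM ?e'M ?ee eqxx.
Qed.

Definition c (M : {set AT * PT}) (r : nat) := #|[set e in M | rk e.1 e.2 == r]|.

Definition Q1 : {set PT} := [set p : PT | if p is inl y then ord_ y == 0 :> nat else true].

Lemma Q1_card : #|Q1| <= n - 2.
Proof.
have sub : Q1 \subset [set inl y | y in [set y | ord_ y == 0 :> nat]] :|: [set inr j | j : 'I_(n-3)].
  apply/subsetP => [[y|j]]; rewrite !inE => h; apply/orP; [left|right].
    by apply/imsetP; exists y; rewrite ?inE.
  by apply/imsetP; exists j.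
apply: leq_trans (subset_leq_card sub) _; rewrite cardsU.
have h1 : #|[set inl y | y in [set y | ord_ y == 0 :> nat]] : {set PT}| <= 1.
  apply: leq_trans (leq_imset_card _ _) _; apply/card_le1_eqP => y y'; rewrite !inE.
  move=> /eqP h /eqP h'; apply: ord_inj; apply: val_inj; by rewrite /= h h'.
have h2 : #|[set inr j | j : 'I_(n-3)] : {set PT}| = n - 3.
  by rewrite card_imset ?card_ord //; move=> i j [].
lia.
Qed.

Lemma rank1_Q1 a p : rk a p = 1 -> p \in Q1.
Proof.
rewrite inE; case: a => [x|i]; case: p => [y|j] //=.
by case: (E x y) => // -[->].
Qed.

Lemma rk_inl a y r : rk a (inl y) = r -> 0 < r ->
  exists2 x, a = inl x & E x y /\ (ord_ y).+1 = r.
Proof.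
case: a => [x|i] /=; last by move=> <-.
case: (boolP (E x y)) => Exy; last by move=> <-.
by move=> <- _; exists x.
Qed.

Lemma F1 M : is_matching rk M -> c M 1 <= n - 2.
Proof.
move=> hM; rewrite /c.
rewrite -(@card_in_imset _ _ (fun e : AT * PT => e.2)); last first.
  move=> e e'; rewrite !inE => /andP [eM _] /andP [e'M _]; exact: (post_inj hM).
apply: leq_trans Q1_card; apply: subset_leq_card; apply/subsetP => p.
case/imsetP => e; rewrite inE => /andP [_ /eqP h] ->; exact: (rank1_Q1 h).
Qed.

Lemma F1_full M : is_matching rk M -> c M 1 = n - 2 ->
  forall p, p \in Q1 -> exists2 e, e \in M & e.2 = p /\ rk e.1 e.2 = 1.
Proof.
move=> hM hc p pQ.
have inj : {in [set e in M | rk e.1 e.2 == 1] &, injective (fun e : AT * PT => e.2)}.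
  move=> e e'; rewrite !inE => /andP [eM _] /andP [e'M _]; exact: (post_inj hM).
have sub : [set e.2 | e in [set e in M | rk e.1 e.2 == 1]] \subset Q1.
  apply/subsetP => q; case/imsetP => e; rewrite inE => /andP [_ /eqP h] ->; exact: (rank1_Q1 h).
have : [set e.2 | e in [set e in M | rk e.1 e.2 == 1]] == Q1.
  rewrite eqEcard sub (card_in_imset inj) /=; move: hc; rewrite /c => ->; exact: Q1_card.
move/eqP => eq; move: pQ; rewrite -eq => /imsetP [e]; rewrite inE => /andP [eM /eqP h] ->.
by exists e.
Qed.

Lemma F2 M : is_matching rk M -> c M 1 = n - 2 -> forall r, 2 <= r -> c M r <= 1.
Proof.
move=> hM hc r hr; apply/card_le1_eqP => e e'; rewrite !inE.
have key : forall f, f \in M -> rk f.1 f.2 == r ->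
    exists2 y, f.2 = inl y & (ord_ y).+1 = r.
  move=> [a [y|j]] fM /eqP hf /=.
    have [x _ [_ h]] := rk_inl hf (leq_trans (isT : 0 < 2) hr); by exists y.
  have hj : (inr j : PT) \in Q1 by rewrite inE.
  have [f' f'M [f2 f1]] := F1_full hM hc hj.
  have := post_inj hM fM f'M; rewrite f2 => /(_ erefl) ef; move: hf.
  by rewrite ef f1 => hr1; move: hr; rewrite -hr1.
move=> /andP [eM er] /andP [e'M e'r].
have [y ey hy] := key e eM er; have [y' ey' hy'] := key e' e'M e'r.
suff: e.2 = e'.2 by move/(post_inj hM eM e'M) => ->.
rewrite ey ey'; congr inl.
apply: ord_inj; apply: val_inj => /=; move: hy hy'; lia.
Qed.

Definition s0f (i : nat) := if i == 1 then n - 2 else 1.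

Lemma sigE M : signature rk M = map (c M) (iota 1 n).
Proof. by rewrite /signature max_rank_n. Qed.

Lemma iota1n : iota 1 n = 1 :: iota 2 (n - 1).
Proof. by case: n hn => [|k] //= _; rewrite subn1. Qed.

Lemma upper M : is_matching rk M -> lex_le (signature rk M) (map s0f (iota 1 n)).
Proof.
move=> hM; rewrite sigE.
case: (ltngtP (c M 1) (n - 2)) => h.
- by rewrite iota1n /= /s0f /= h.
- by move: (F1 hM); rewrite leqNgt h.
- apply: lex_map_le => i; rewrite mem_iota => /andP [i1 _].
  rewrite /s0f; case: eqP => [->|ne]; first by rewrite h.
  by apply: F2 => //; lia.
Qed.

Lemma sum_c_le M s : uniq s -> \sum_(i <- s) c M i <= #|M|.
Proof.
move=> us.
have -> : \sum_(i <- s) c M i = \sum_(i <- s) \sum_(e in M) (rk e.1 e.2 == i : nat).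
  apply: eq_bigr => i _; rewrite /c -sum1_card [LHS]big_mkcond [RHS]big_mkcond /=.
  by apply: eq_bigr => e _; rewrite inE; case: (e \in M); case: eqP.
rewrite exchange_big /= -sum1_card; apply: leq_sum => e _; exact: sum_eq_le1.
Qed.

Lemma memL (PM : {set X * Y}) (e : AT * PT) :
  (e \in lift_matching n PM) =
  match e with
  | (inl x, inl y) => (x, y) \in PM
  | (inr i, inr j) => i == j
  | _ => false
  end.
Proof.
rewrite /lift_matching inE; case: e => [[x|i] [y|j]].
- apply/orP/idP => [[/imsetP [[x' y'] eM [-> ->]] // | /imsetP [j _ //]] | h].
  by left; apply/imsetP; exists (x, y).
- apply/orP => -[/imsetP [[x' y'] _ //] | /imsetP [k _ //]].
- apply/orP => -[/imsetP [[x' y'] _ //] | /imsetP [k _ //]].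
- apply/orP/eqP => [[/imsetP [[x' y'] _ //] | /imsetP [k _ [-> ->]] //] | ->].
  by right; apply/imsetP; exists j.
Qed.

Lemma pm_inj1 PM : perfect_matching E PM ->
  {in PM &, forall e e', e.1 = e'.1 -> e = e'}.
Proof.
case=> _ h1 _ e e' eM e'M ee.
have /card_le1_eqP h := eq_leq (h1 e.1); apply: h; by rewrite inE ?eM ?e'M ?ee eqxx.
Qed.

Lemma pm_inj2 PM : perfect_matching E PM ->
  {in PM &, forall e e', e.2 = e'.2 -> e = e'}.
Proof.
case=> _ _ h2 e e' eM e'M ee.
have /card_le1_eqP h := eq_leq (h2 e.2); apply: h; by rewrite inE ?eM ?e'M ?ee eqxx.
Qed.

Lemma pm_partner PM y : perfect_matching E PM -> exists x, (x, y) \in PM.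
Proof.
case=> _ _ h2; have : 0 < #|[set e in PM | e.2 == y]| by rewrite h2.
by case/card_gt0P => -[x y']; rewrite inE /= => /andP [eM /eqP ey]; exists x; rewrite -ey.
Qed.

Lemma lift_match PM : perfect_matching E PM -> is_matching rk (lift_matching n PM).
Proof.
move=> hP; have hE := hP; case: hE => hE _ _; split.
- move=> [[x|i] [y|j]]; rewrite memL //=.
    by move=> h; rewrite /is_edge /= (hE _ h).
  by move=> /eqP ->; rewrite /is_edge /= eqxx.
- move=> a; apply/card_le1_eqP => -[a1 p1] [a2 p2].
  move=> /setIdP [e1 /eqP /= ea1] /setIdP [e2 /eqP /= ea2]; subst a1 a2.
  move: e1 e2; rewrite !memL; case: a => [x|i]; case: p1 => [y1|j1]; case: p2 => [y2|j2] //.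
    by move=> h1 h2; have [] := pm_inj1 hP h2 h1 erefl => ->.
  by move=> /eqP <- /eqP <-.
- move=> p; apply/card_le1_eqP => -[a1 p1] [a2 p2].
  move=> /setIdP [e1 /eqP /= ea1] /setIdP [e2 /eqP /= ea2]; subst p1 p2.
  move: e1 e2; rewrite !memL; case: p => [y|j]; case: a1 => [x1|i1]; case: a2 => [x2|i2] //.
    by move=> h1 h2; have [] := pm_inj2 hP h2 h1 erefl => ->.
  by move=> /eqP -> /eqP ->.
Qed.

Lemma c_lift1 PM : perfect_matching E PM -> n - 2 <= c (lift_matching n PM) 1.
Proof.
move=> hP.
have h0 : 0 < n by lia.
have [y1 hy1] := ord_onto (Ordinal h0).
have [x1 hx1] := pm_partner y1 hP.
set S : {set AT * PT} := (inl x1, inl y1) |: [set (inr j, inr j) | j : 'I_(n-3)].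
have sub : S \subset [set e in lift_matching n PM | rk e.1 e.2 == 1].
  apply/subsetP => e /setU1P [-> | /imsetP [j _ ->]]; apply/setIdP; split.
  - by rewrite memL.
  - by case: hP => hE _ _; rewrite /= (hE _ hx1) hy1.
  - by rewrite memL.
  - by rewrite /= eqxx.
apply: leq_trans (subset_leq_card sub); rewrite /S cardsU1 card_imset; last by move=> i j [].
rewrite card_ord.
have -> : ((inl x1, inl y1) : AT * PT) \notin [set ((inr j : AT), (inr j : PT)) | j : 'I_(n-3)].
  by apply/imsetP => -[j _ []].
lia.
Qed.

Lemma c_liftr PM r : perfect_matching E PM -> 2 <= r <= n -> 1 <= c (lift_matching n PM) r.
Proof.
move=> hP /andP [r2 rn].
have hr : r.-1 < n by lia.
have [y hy] := ord_onto (Ordinal hr).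
have [x hx] := pm_partner y hP.
apply/card_gt0P; exists (inl x, inl y); apply/setIdP; split; first by rewrite memL.
case: hP => hE _ _; rewrite /= (hE _ hx) hy /=; apply/eqP; lia.
Qed.

Lemma sig_lift PM : perfect_matching E PM ->
  signature rk (lift_matching n PM) = map s0f (iota 1 n).
Proof.
move=> hP; have hL := lift_match hP.
have c1 : c (lift_matching n PM) 1 = n - 2.
  by apply/eqP; rewrite eqn_leq F1 // c_lift1.
rewrite sigE; apply/eq_in_map => i; rewrite mem_iota => /andP [i1 i2].
rewrite /s0f; case: eqP => [->//|ne].
apply/eqP; rewrite eqn_leq F2 //; last by lia.
apply: c_liftr => //; lia.
Qed.

Lemma dir1 PM : perfect_matching E PM -> rank_maximal rk (lift_matching n PM).
Proof.
move=> hP; split; first exact: lift_match.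
move=> M' hM'; rewrite sig_lift //; exact: upper.
Qed.

Lemma dir2 (M1 M2 : {set X * Y}) : lift_matching n M1 = lift_matching n M2 -> M1 = M2.
Proof.
move=> e; apply/setP => -[x y].
have := congr1 (fun L : {set AT * PT} => ((inl x, inl y) : AT * PT) \in L) e; by rewrite /= !memL.
Qed.

Lemma pm_exists : exists PM : {set X * Y}, perfect_matching E PM.
Proof.
have : 0 < #|Y| by rewrite hY; lia.
case/card_gt0P => y0 _.
have hc := reg_hall hregX hregY (isT : 0 < 3).
have [f [fE fi]] := hall y0 (leqnn #|[set: X]|) hc.
exists [set (x, f x) | x : X]; apply: pm_of.
- by rewrite hX hY.
- move=> e /imsetP [x _ ->] /=; by case/andP: (fE x (in_setT x)).
- by move=> e e' /imsetP [x _ ->] /imsetP [x' _ ->] /= ->.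
- move=> e e' /imsetP [x _ ->] /imsetP [x' _ ->] /= h.
  by rewrite (fi x x' (in_setT _) (in_setT _) h).
- by move=> x; exists (f x); apply/imsetP; exists x.
Qed.

Lemma dir3 (M' : {set AT * PT}) : rank_maximal rk M' ->
  exists2 M : {set X * Y}, perfect_matching E M & lift_matching n M = M'.
Proof.
case=> hM rm.
have [PM0 hP0] := pm_exists.
have := rm _ (lift_match hP0); rewrite sig_lift // sigE iota1n /= {1}/s0f /=.
case/orP => [lt | /andP [/eqP c1 hl]]; first by move: (F1 hM); rewrite leqNgt lt.
have hle : forall i, i \in iota 2 (n - 1) -> c M' i <= s0f i.
  move=> i; rewrite mem_iota => /andP [i2 _]; rewrite /s0f.
  have -> : (i == 1) = false by apply/eqP; lia.
  apply: F2 => //.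
have ceq := lex_map_eq hl hle.
have hsum := sum_c_le M' (iota_uniq 1 n).
rewrite iota1n big_cons -c1 in hsum.
have : \sum_(i <- iota 2 (n - 1)) c M' i = n - 1.
  rewrite -[n - 1 in RHS](size_iota 2) -sum1_size; apply: eq_big_seq => i iI.
  by rewrite ceq // /s0f; case: eqP => // e1; move: iI; rewrite e1 mem_iota.
move=> hs; rewrite hs /s0f /= in hsum.
have allA : forall a : AT, exists2 e, e \in M' & e.1 = a.
  have inj : {in M' &, injective (fun e : AT * PT => e.1)} by move=> e e'; exact: (app_inj hM).
  have T1 : [set e.1 | e in M'] = setT.
    apply/eqP; rewrite eqEcard subsetT cardsT (card_in_imset inj) /=.
    rewrite card_sum card_ord hX; lia.
  move=> a; have : a \in [set e.1 | e in M'] by rewrite T1 inE.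
  by case/imsetP => e eM ->; exists e.
have hedge : forall e, e \in M' -> 0 < rk e.1 e.2 by case: hM => h _ _.
have diag : forall j : 'I_(n-3), ((inr j, inr j) : AT * PT) \in M'.
  move=> j; have [[a p] eM /= ea] := allA (inr j); subst a.
  move: (hedge _ eM) => /=; case: p eM => [y //|j'] eM /=.
  by case: eqP => // ejj _; rewrite {2}ejj.
have noinlr : forall x j, ((inl x, inr j) : AT * PT) \notin M'.
  move=> x j; apply/negP => h.
  by have := post_inj hM h (diag j) erefl.
exists [set e : X * Y | ((inl e.1, inl e.2) : AT * PT) \in M'].
  apply: pm_of.
  - by rewrite hX hY.
  - move=> [x y]; rewrite inE /= => h; move: (hedge _ h) => /=; by case: (E x y).
  - move=> [x y] [x' y']; rewrite !inE /= => h h' ex.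
    by have [_ ->] := app_inj hM h h' (congr1 inl ex) ; rewrite -ex.
  - move=> [x y] [x' y']; rewrite !inE /= => h h' ey.
    by have [-> _] := post_inj hM h h' (congr1 inl ey) ; rewrite -ey.
  - move=> x; have [[a [y|j]] eM /= ea] := allA (inl x); subst a.
      by exists y; rewrite inE.
    by move: (noinlr x j); rewrite eM.
apply/setP => -[[x|i] [y|j]]; rewrite memL.
- by rewrite inE.
- by rewrite (negbTE (noinlr x j)).
- by apply/esym/negP => h; move: (hedge _ h).
- apply/eqP/idP => [<-|h]; first exact: diag.
  by move: (hedge _ h) => /=; case: eqP.
Qed.

End Main.

Unset Implicit Arguments.

Theorem lemma5 (X Y : finType) (n : nat) (E : X -> Y -> bool)
    (ord_ : Y -> 'I_n) (dr : X -> 'I_(n - 3) -> nat)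
    (hX : #|X| = n) (hY : #|Y| = n)
    (hregX : forall x : X, #|[set y | E x y]| = 3)
    (hregY : forall y : Y, #|[set x | E x y]| = 3)
    (hord : bijective ord_)
    (hdr_inj : forall x : X, injective (dr x))
    (hdr_range : forall (x : X) (i : 'I_(n - 3)), 1 <= dr x i <= n)
    (hdr_fresh : forall (x : X) (i : 'I_(n - 3)) (y : Y),
        E x y -> dr x i != (ord_ y).+1) :
  let rk := G_rank E ord_ dr in
  [/\ forall M : {set X * Y}, perfect_matching E M ->
        rank_maximal rk (lift_matching n M),
      forall M1 M2 : {set X * Y}, perfect_matching E M1 ->
        perfect_matching E M2 ->
        lift_matching n M1 = lift_matching n M2 -> M1 = M2
    & forall M' : {set (X + 'I_(n - 3)) * (Y + 'I_(n - 3))},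
        rank_maximal rk M' ->
        exists2 M : {set X * Y}, perfect_matching E M &
          lift_matching n M = M'].

Proof.
move=> rk.
case: (leqP 3 n) => hn.
  split.
  - by move=> M hM; apply: (dir1 hX hY hregY hord hdr_range hn).
  - by move=> M1 M2 _ _; apply: dir2.
  - by move=> M' hM'; apply: (dir3 hX hY hregX hregY hord hdr_range hn).
have noel : forall T : finType, #|T| = 0 -> T -> False.
  by move=> T h x; move: (card0_eq h x); rewrite !inE.
have emp : forall (T : finType) (A B : {set T}), #|T| = 0 -> A = B.
  by move=> T A B h; apply/setP => x; case: (noel T h x).
have X0 : #|X| = 0.
  apply/eqP; rewrite -leqn0 leqNgt; apply/negP => /card_gt0P [x _].
  by have := max_card (mem [set y | E x y]); rewrite hregX hY; lia.
have n0 : n = 0 by lia.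
have cAP : #|{: (X + 'I_(n - 3)) * (Y + 'I_(n - 3))}| = 0.
  by rewrite card_prod !card_sum !card_ord X0 hY n0.
have hmat : forall L, is_matching rk L.
  move=> L; split => [e _|a|p]; first by case: (noel _ cAP e).
    by apply: leq_trans (max_card _) _; rewrite cAP.
  by apply: leq_trans (max_card _) _; rewrite cAP.
split.
- move=> M _; split => // M' _; rewrite (emp _ M' (lift_matching n M) cAP).
  by elim: (signature rk _) => //= a s ->; rewrite eqxx orbT.
- by move=> M1 M2 _ _ _; apply: emp; rewrite card_prod X0.
- move=> M' _; exists set0; last by apply: emp.
  split => [e|x|y]; first by rewrite inE.
    by case: (noel _ X0 x).
  have Y0 : #|Y| = 0 by lia.
  by case: (noel _ Y0 y).
Qed.
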